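(* Let $q\ge1$, $(a,q)=1$, $X\ge2$ and $1\le h\le X$. Then $$J_{1,a,q}(X,h):=\int_0^h\Big|\sum_{n\le x}F(n)e^{-n/X}\Big|^2dx\ll H_{a,q}(h)+\frac{h}{\varphi^2(q)},$$ where $F(n)=\Lambda(n)\delta(n)-\frac{1}{\varphi(q)}+\frac{\widetilde\chi(a)}{\varphi(q)}n^{\widetilde\beta-1}$ and $H_{a,q}(y)=\int_0^y\Big(\psi(t,q,a)-\frac{t}{\varphi(q)}+\frac{\widetilde\chi(a)}{\varphi(q)}\frac{t^{\widetilde\beta}}{\widetilde\beta}\Big)^2dt$.
   Context: $\Lambda$ is the von Mangoldt function, $\varphi$ Euler's totient, $\delta(n)=1$ if $n\equiv a\pmod q$ and $0$ otherwise, $\psi(t,q,a)=\sum_{m\le t,\ m\equiv a (q)}\Lambda(m)$. $\widetilde\beta$ is the possible Siegel (exceptional) zero for modulus $q$, a real zero of $L(s,\widetilde\chi)$ for the exceptional real character $\widetilde\chi$ mod $q$ (at most one exists; if none, the terms involving $\widetilde\beta$ are absent). *)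

(* Defs.v *)
From Stdlib Require Import Reals ZArith Arith.
From Coquelicot Require Import Coquelicot.
From mathcomp Require Import ssreflect ssrbool ssrnat seq prime.
Set Implicit Arguments.
Open Scope R_scope.

Fixpoint sum1 (f : nat -> R) (N : nat) : R :=
  match N with
  | O => 0
  | S m => sum1 f m + f (S m)
  end.

(* floor of a real, as a nat (0 for negative reals) *)
Definition nfloor (x : R) : nat := Z.to_nat (Int_part x).

(* von Mangoldt: log p if n = p^k (k >= 1), 0 otherwise *)
Definition vonMangoldt (n : nat) : R :=
  match primes n with
  | [:: p] => ln (INR p)
  | _ => 0
  end.

Definition phiR (q : nat) : R := INR (totient q).

Definition congr (q : nat) (a : Z) (n : nat) : bool :=
  Z.eqb (Z.modulo (Z.of_nat n) (Z.of_nat q)) (Z.modulo a (Z.of_nat q)).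

Definition psi (t : R) (q : nat) (a : Z) : R :=
  sum1 (fun m => if congr q a m then vonMangoldt m else 0) (nfloor t).

(* real power t^b, t > 0 (set to 0 for t <= 0) *)
Definition rpow (t b : R) : R := if Rle_dec t 0 then 0 else Rpower t b.

Definition real_dirichlet_char (q : nat) (chi : nat -> R) : Prop :=
  (forall m n, chi (m * n)%nat = chi m * chi n) /\
  chi 1%nat = 1 /\
  (forall n, chi (n + q)%nat = chi n) /\
  (forall n, chi n = 0 <-> Nat.gcd n q <> 1%nat).

Definition nonprincipal (chi : nat -> R) : Prop :=
  exists n, chi n <> 0 /\ chi n <> 1.

(* L(s,chi) = 0 for real s, via convergence of the partial sums of the
   (conditionally convergent, chi nonprincipal) Dirichlet series. *)
Definition L_zero (chi : nat -> R) (s : R) : Prop :=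
  Un_cv (fun N => sum1 (fun n => chi n * Rpower (INR n) (- s)) N) 0.

(* Exceptional (Siegel) zero for modulus q, relative to the absolute
   constant c0 of the zero-free region: a real zero beta of L(s,chi) with
   chi a real nonprincipal character mod q and 1 - c0/log q < beta < 1. *)
Definition exceptional (c0 : R) (q : nat) (chi : nat -> R) (beta : R) : Prop :=
  real_dirichlet_char q chi /\ nonprincipal chi /\
  1 - c0 / ln (INR q) < beta < 1 /\ L_zero chi beta.

Definition chiZ (chi : nat -> R) (q : nat) (a : Z) : R :=
  chi (Z.to_nat (Z.modulo a (Z.of_nat q))).

(* F(n) = Lambda(n) delta(n) - 1/phi(q) + (eps/phi(q)) n^(beta-1),
   eps = chi~(a) (eps = 0 when there is no exceptional zero). *)
Definition Fn (q : nat) (a : Z) (eps beta : R) (n : nat) : R :=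
  (if congr q a n then vonMangoldt n else 0) - 1 / phiR q
  + eps / phiR q * rpow (INR n) (beta - 1).

Definition J1 (q : nat) (a : Z) (eps beta X h : R) : R :=
  RInt (fun x => (Rabs (sum1 (fun n => Fn q a eps beta n * exp (- INR n / X))
                              (nfloor x))) ^ 2) 0 h.

Definition Hq (q : nat) (a : Z) (eps beta y : R) : R :=
  RInt (fun t => (psi t q a - t / phiR q + eps / phiR q * (rpow t beta / beta)) ^ 2)
    0 y.

(* Main.v *)
Require Import Defs.
From Stdlib Require Import Reals ZArith Arith Lra Lia.
From Coquelicot Require Import Coquelicot.
Open Scope R_scope.

Fixpoint sum0 (u : nat -> R) (N : nat) : R :=
  match N with O => 0 | S m => sum0 u m + u m end.

Lemma sum1_ext f g N : (forall n, f n = g n) -> sum1 f N = sum1 g N.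
Proof. intros H; induction N; simpl; [reflexivity| rewrite IHN, H; reflexivity]. Qed.

Lemma sum1_le f g N : (forall n, f n <= g n) -> sum1 f N <= sum1 g N.
Proof. intros H; induction N; simpl; [lra| specialize (H (S N)); lra]. Qed.

Lemma sum0_le f g N : (forall n, f n <= g n) -> sum0 f N <= sum0 g N.
Proof. intros H; induction N; simpl; [lra| specialize (H N); lra]. Qed.

Lemma sum0_nonneg f N : (forall n, 0 <= f n) -> 0 <= sum0 f N.
Proof. intros H; induction N; simpl; [lra| specialize (H N); lra]. Qed.

Lemma sum0_mono f N M : (forall n, 0 <= f n) -> (N <= M)%nat -> sum0 f N <= sum0 f M.
Proof. intros H HNM; induction HNM; simpl; [lra| specialize (H m); lra]. Qed.

Lemma sum0_S1 v m : sum0 v (S m) = v O + sum1 v m.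
Proof. induction m; simpl in *; [lra| rewrite IHm; lra]. Qed.

Lemma sum0_lin v K L N : sum0 (fun n => K * v n + L) N = K * sum0 v N + INR N * L.
Proof. induction N; simpl sum0; [simpl; ring| rewrite IHN, S_INR; ring]. Qed.

Lemma sum1_lin f g k m N :
  sum1 (fun n => f n - k + m * g n) N = sum1 f N - INR N * k + m * sum1 g N.
Proof. induction N; simpl sum1; [simpl; ring| rewrite IHN, S_INR; ring]. Qed.

Lemma nfloor_eq (x : R) (n : nat) : INR n <= x < INR n + 1 -> Defs.nfloor x = n.
Proof.
  intros H. unfold Defs.nfloor.
  assert (E : Z.of_nat n = Int_part x).
  { apply Int_part_spec. rewrite <- INR_IZR_INZ. lra. }
  rewrite <- E. apply Nat2Z.id.
Qed.

Lemma nfloor_spec (x : R) : 0 <= x -> INR (Defs.nfloor x) <= x < INR (Defs.nfloor x) + 1.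
Proof.
  intros Hx. unfold Defs.nfloor. destruct (base_Int_part x) as [H1 H2].
  assert (Hz : (0 <= Int_part x)%Z).
  { assert (IZR (Int_part x) > -1) by lra.
    assert (-1 < Int_part x)%Z by (apply lt_IZR; lra). lia. }
  rewrite INR_IZR_INZ, Z2Nat.id; [lra| exact Hz].
Qed.

Lemma scalR (a b : R) : scal a b = a * b.
Proof. reflexivity. Qed.
Lemma plusR (a b : R) : plus a b = a + b.
Proof. reflexivity. Qed.

Lemma is_RInt_step_piece (u : nat -> R) (n : nat) (b : R) :
  INR n <= b <= INR n + 1 ->
  is_RInt (fun x => u (Defs.nfloor x)) (INR n) b ((b - INR n) * u n).
Proof.
  intros Hb.
  assert (H := is_RInt_const (V := R_NormedModule) (INR n) b (u n)).
  rewrite scalR in H.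
  eapply is_RInt_ext; [| exact H].
  intros x Hx. rewrite Rmin_left in Hx; [|lra]. rewrite Rmax_right in Hx; [|lra].
  rewrite (nfloor_eq x n); [reflexivity| lra].
Qed.

Lemma is_RInt_step0 (u : nat -> R) (N : nat) :
  is_RInt (fun x => u (Defs.nfloor x)) 0 (INR N) (sum0 u N).
Proof.
  induction N.
  - simpl. apply (is_RInt_point (V := R_NormedModule)).
  - rewrite S_INR. simpl sum0.
    assert (Hp := is_RInt_step_piece u N (INR N + 1) ltac:(lra)).
    assert (H := is_RInt_Chasles _ _ _ _ _ _ IHN Hp).
    replace (sum0 u N + u N) with (sum0 u N + (INR N + 1 - INR N) * u N) by ring.
    exact H.
Qed.

Lemma is_RInt_step (u : nat -> R) (h : R) : 0 <= h ->
  is_RInt (fun x => u (Defs.nfloor x)) 0 h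
    (sum0 u (Defs.nfloor h) + (h - INR (Defs.nfloor h)) * u (Defs.nfloor h)).
Proof.
  intros Hh. pose proof (nfloor_spec h Hh).
  assert (H1 := is_RInt_Chasles _ _ _ _ _ _ (is_RInt_step0 u (Defs.nfloor h))
     (is_RInt_step_piece u (Defs.nfloor h) h ltac:(lra))).
  exact H1.
Qed.

Lemma ex_RInt_pieces (f : R -> R) (h : R) :
  (forall n : nat, ex_RInt f (INR n) (INR n + 1)) -> 0 <= h -> ex_RInt f 0 h.
Proof.
  intros Hp Hh.
  assert (H0 : forall N, ex_RInt f 0 (INR N)).
  { induction N.
    - simpl. apply ex_RInt_point.
    - rewrite S_INR. eapply ex_RInt_Chasles; [exact IHN| apply Hp]. }
  pose proof (nfloor_spec h Hh) as Hs.
  eapply ex_RInt_Chasles; [apply (H0 (Defs.nfloor h))|].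
  apply (ex_RInt_Chasles_1 (V := R_CompleteNormedModule) f _ h (INR (Defs.nfloor h) + 1)); [| apply Hp]. lra.
Qed.

Lemma Rpower_base_lt x y b : 0 < x < y -> 0 < b -> Rpower x b < Rpower y b.
Proof.
  intros Hxy Hb. unfold Rpower. apply exp_increasing.
  apply Rmult_lt_compat_l; [lra|]. apply ln_increasing; lra.
Qed.

Lemma Rpower_base_gt x y b : 0 < x < y -> b < 0 -> Rpower y b < Rpower x b.
Proof.
  intros Hxy Hb. unfold Rpower. apply exp_increasing.
  assert (ln x < ln y) by (apply ln_increasing; lra). nra.
Qed.

Lemma Rpower_1base b : Rpower 1 b = 1.
Proof. unfold Rpower. rewrite ln_1, Rmult_0_r, exp_0. reflexivity. Qed.

Lemma Rpower_gt0 x b : 0 < Rpower x b.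
Proof. unfold Rpower. apply exp_pos. Qed.

Lemma rpow_pos x b : 0 < x -> rpow x b = Rpower x b.
Proof. intros H. unfold rpow. destruct (Rle_dec x 0); [lra| reflexivity]. Qed.

Lemma rpow_nonpos x b : x <= 0 -> rpow x b = 0.
Proof. intros H. unfold rpow. destruct (Rle_dec x 0); [reflexivity| lra]. Qed.

Lemma rpow_cont_pt b : 0 < b -> forall x, continuity_pt (fun t => rpow t b) x.
Proof.
  intros Hb x. destruct (Rlt_or_le 0 x) as [Hx|Hx].
  - apply continuity_pt_locally_ext with (f := fun t => Rpower t b) (a := x); [lra| |].
    + intros y Hy. unfold Rdist in Hy. rewrite rpow_pos; [reflexivity|].
      apply Rabs_def2 in Hy. lra.
    + apply derivable_continuous_pt. exists (b * Rpower x (b - 1)).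
      apply derivable_pt_lim_power; lra.
  - destruct Hx as [Hx|Hx].
    + apply continuity_pt_locally_ext with (f := fun t => 0) (a := - x); [lra| |].
      * intros y Hy. unfold Rdist in Hy. rewrite rpow_nonpos; [reflexivity|].
        apply Rabs_def2 in Hy. lra.
      * apply continuity_pt_const. intros u v; reflexivity.
    + subst x. intros eps Heps. exists (Rpower eps (1 / b)). split.
      * apply Rpower_gt0.
      * intros y [_ Hy]. unfold R_dist in *. simpl in *. unfold Rdist in *.
        rewrite (rpow_nonpos 0 b) by lra. rewrite Rminus_0_r in *.
        destruct (Rle_or_lt y 0) as [Hy0|Hy0].
        -- rewrite rpow_nonpos by lra. rewrite Rabs_R0. exact Heps.
        -- rewrite rpow_pos by lra. rewrite Rabs_pos_eq by (left; apply Rpower_gt0).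
           rewrite Rabs_pos_eq in Hy by lra.
           replace eps with (Rpower (Rpower eps (1 / b)) b).
           ++ apply Rpower_base_lt; [lra| exact Hb].
           ++ rewrite Rpower_mult. replace (1 / b * b) with 1 by (field; lra).
              apply Rpower_1; lra.
Qed.

Lemma rpow_cont b : 0 < b -> forall x, continuous (fun t => rpow t b) x.
Proof. intros Hb x. apply continuity_pt_filterlim. apply rpow_cont_pt; exact Hb. Qed.

Lemma mvt_up b k : 0 < b < 1 -> 1 <= k ->
  Rpower (k + 1) b - Rpower k b <= b * Rpower k (b - 1).
Proof.
  intros Hb Hk.
  destruct (MVT_cor2 (fun x => Rpower x b) (fun x => b * Rpower x (b - 1)) k (k + 1))
    as [c [Hc1 Hc2]]; [lra| |].
  - intros c Hc. apply derivable_pt_lim_power. lra.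
  - rewrite Hc1. replace (k + 1 - k) with 1 by ring. rewrite Rmult_1_r.
    apply Rmult_le_compat_l; [lra|]. left. apply Rpower_base_gt; lra.
Qed.

Lemma mvt_down b k : 0 < b < 1 -> 2 <= k ->
  b * Rpower k (b - 1) <= Rpower k b - Rpower (k - 1) b.
Proof.
  intros Hb Hk.
  destruct (MVT_cor2 (fun x => Rpower x b) (fun x => b * Rpower x (b - 1)) (k - 1) k)
    as [c [Hc1 Hc2]]; [lra| |].
  - intros c Hc. apply derivable_pt_lim_power. lra.
  - rewrite Hc1. replace (k - (k - 1)) with 1 by ring. rewrite Rmult_1_r.
    apply Rmult_le_compat_l; [lra|]. left. apply Rpower_base_gt; lra.
Qed.

Lemma sum1_S f N : sum1 f (S N) = sum1 f N + f (S N).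
Proof. reflexivity. Qed.

Definition spow (b : R) (N : nat) : R := sum1 (fun n => rpow (INR n) (b - 1)) N.

Lemma spow_up b N : 0 < b < 1 -> b * spow b N <= rpow (INR N) b.
Proof.
  intros Hb. induction N.
  - unfold spow; simpl. rewrite rpow_nonpos by lra. lra.
  - unfold spow in *. rewrite sum1_S, S_INR.
    rewrite !(rpow_pos (INR N + 1)) by (pose proof (pos_INR N); lra).
    destruct N.
    + change (INR 0) with 0. simpl sum1. replace (0 + 1) with 1 by ring. rewrite !Rpower_1base. lra.
    + pose proof (mvt_down b (INR (S N) + 1) Hb ltac:(rewrite S_INR; pose proof (pos_INR N); lra)).
      replace (INR (S N) + 1 - 1) with (INR (S N)) in H by ring.
      rewrite rpow_pos in IHN by (rewrite S_INR; pose proof (pos_INR N); lra).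
      lra.
Qed.

Lemma spow_low b N : 0 < b < 1 -> rpow (INR N + 1) b - 1 <= b * spow b N.
Proof.
  intros Hb. induction N.
  - unfold spow; simpl. rewrite rpow_pos by lra. rewrite Rplus_0_l, Rpower_1base. lra.
  - unfold spow in *. rewrite sum1_S, S_INR.
    rewrite !rpow_pos in * by (pose proof (pos_INR N); lra).
    pose proof (mvt_up b (INR N + 1) Hb ltac:(pose proof (pos_INR N); lra)).
    lra.
Qed.

Lemma rpow_mono x y b : 0 <= x <= y -> 0 < b -> rpow x b <= rpow y b.
Proof.
  intros Hxy Hb. destruct (Req_dec x 0) as [E|E].
  - subst. rewrite (rpow_nonpos 0) by lra. destruct (Rle_or_lt y 0).
    + rewrite rpow_nonpos by lra. lra.
    + rewrite rpow_pos by lra. left; apply Rpower_gt0.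
  - rewrite !rpow_pos by lra. destruct (Req_dec x y) as [E2|E2]; [subst; lra|].
    left. apply Rpower_base_lt; lra.
Qed.

Lemma spow_disc b x : 0 < b < 1 -> 0 <= x ->
  0 <= rpow x b / b - spow b (Defs.nfloor x) <= 1 / b.
Proof.
  intros Hb Hx. pose proof (nfloor_spec x Hx) as Hs.
  set (N := Defs.nfloor x) in *.
  pose proof (spow_up b N Hb). pose proof (spow_low b N Hb).
  pose proof (rpow_mono (INR N) x b ltac:(pose proof (pos_INR N); lra) ltac:(lra)).
  pose proof (rpow_mono x (INR N + 1) b ltac:(lra) ltac:(lra)).
  split.
  - apply Rmult_le_reg_l with b; [lra|]. field_simplify; [|lra]. lra.
  - apply Rmult_le_reg_l with b; [lra|]. field_simplify; [|lra|lra]. lra.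
Qed.

Lemma chi_le1 q chi : real_dirichlet_char q chi -> (1 <= q)%nat ->
  forall n, Rabs (chi n) <= 1.
Proof.
  intros [Hm [H1 [Hp Hz]]] Hq.
  assert (Hmul : forall m n, chi (m * n)%nat = chi m * chi n) by exact Hm.
  assert (Hper : forall n, chi (n + q)%nat = chi n) by exact Hp.
  assert (Hper2 : forall k m, chi (m + k * q)%nat = chi m).
  { induction k; intros m.
    - rewrite Nat.mul_0_l, Nat.add_0_r. reflexivity.
    - replace (m + S k * q)%nat with ((m + k * q) + q)%nat by lia.
      rewrite Hper. apply IHk. }
  assert (Hmod : forall m, chi m = chi (m mod q)).
  { intros m. rewrite (Nat.div_mod_eq m q) at 1.
    replace (q * (m / q) + m mod q)%nat with (m mod q + (m / q) * q)%nat by lia.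
    apply Hper2. }
  set (B := sum0 (fun i => Rabs (chi i)) q).
  assert (HB : forall i, (i < q)%nat -> Rabs (chi i) <= B).
  { intros i Hi. unfold B. clear -Hi.
    induction Hi.
    - simpl. assert (0 <= sum0 (fun i => Rabs (chi i)) i)
        by (apply sum0_nonneg; intros; apply Rabs_pos). lra.
    - simpl. pose proof (Rabs_pos (chi m)). lra. }
  assert (Hpow : forall n k, chi (n ^ k)%nat = chi n ^ k).
  { intros n k. induction k.
    - simpl. exact H1.
    - rewrite Nat.pow_succ_r', Hmul, IHk. reflexivity. }
  intros n. destruct (Rle_or_lt (Rabs (chi n)) 1) as [H|H]; [exact H|].
  exfalso. destruct (Pow_x_infinity (chi n) ltac:(lra) (B + 1)) as [N HN].
  specialize (HN N (le_n N)).
  rewrite <- Hpow, Hmod in HN.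
  assert (Rabs (chi ((n ^ N) mod q)%nat) <= B) by (apply HB; apply Nat.mod_upper_bound; lia).
  lra.
Qed.

Section Abel.
Variable F : nat -> R.
Variable X : R.
Hypothesis HX : 0 < X.

Definition ww (n : nat) : R := exp (- INR n / X).
Definition dd (n : nat) : R := ww n - ww (S n).
Definition Aa (N : nat) : R := sum1 F N.
Definition Ss (N : nat) : R := sum1 (fun n => F n * ww n) N.

Lemma abel N : Ss N = Aa N * ww (S N) + sum1 (fun n => Aa n * dd n) N.
Proof.
  induction N.
  - unfold Ss, Aa. simpl. ring.
  - unfold Ss, Aa in *. rewrite !sum1_S, IHN. unfold dd. ring.
Qed.

Lemma abel2 m : Ss (S m) = Aa (S m) * ww (S m) + sum1 (fun n => Aa n * dd n) m.
Proof. rewrite abel, sum1_S. unfold dd. ring. Qed.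

Lemma ww_bounds n : 0 < ww n <= 1.
Proof.
  unfold ww. split; [apply exp_pos|].
  rewrite <- exp_0. destruct (Req_dec (- INR n / X) 0) as [E|E]; [rewrite E; lra|].
  left. apply exp_increasing. pose proof (pos_INR n).
  assert (0 <= INR n / X) by (apply Rdiv_le_0_compat; lra).
  unfold Rdiv in *. lra.
Qed.

Lemma dd_bounds n : 0 <= dd n <= 1 / X.
Proof.
  unfold dd, ww. rewrite S_INR.
  replace (- (INR n + 1) / X) with (- INR n / X + (- 1 / X)) by (field; lra).
  rewrite exp_plus.
  pose proof (exp_ineq1_le (- 1 / X)).
  assert (exp (- 1 / X) <= 1).
  { rewrite <- exp_0. destruct (Req_dec (-1/X) 0) as [E|E]; [rewrite E; lra|].
    left; apply exp_increasing. assert (0 < 1 / X) by (apply Rdiv_lt_0_compat; lra).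
    unfold Rdiv in *; lra. }
  pose proof (exp_pos (- INR n / X)). pose proof (exp_pos (- 1 / X)).
  pose proof (ww_bounds n) as Hw. unfold ww in Hw.
  split.
  - nra.
  - assert (exp (- INR n / X) - exp (- INR n / X) * exp (- 1 / X)
            = exp (- INR n / X) * (1 - exp (- 1 / X))) by ring.
    assert (1 - exp (-1 / X) <= 1 / X) by (unfold Rdiv in *; lra).
    assert (0 <= 1 / X) by (left; apply Rdiv_lt_0_compat; lra).
    nra.
Qed.

Lemma sum_dd m : sum1 dd m <= 1.
Proof.
  assert (E : sum1 dd m = ww 1 - ww (S m)).
  { induction m; [simpl; ring|]. rewrite sum1_S, IHm. unfold dd. ring. }
  rewrite E. pose proof (ww_bounds 1). pose proof (ww_bounds (S m)). lra.
Qed.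

End Abel.

Lemma sum1_quad d y mu m :
  sum1 (fun n => d n * (y n - mu) ^ 2) m =
  sum1 (fun n => d n * y n ^ 2) m - 2 * mu * sum1 (fun n => d n * y n) m
  + mu ^ 2 * sum1 d m.
Proof. induction m; [simpl; ring|]. rewrite !sum1_S, IHm. ring. Qed.

Lemma jensen d y m : (forall n, 0 <= d n) -> sum1 d m <= 1 ->
  (sum1 (fun n => d n * y n) m) ^ 2 <= sum1 (fun n => d n * y n ^ 2) m.
Proof.
  intros Hd Hs. set (mu := sum1 (fun n => d n * y n) m).
  assert (H0 : 0 <= sum1 (fun n => d n * (y n - mu) ^ 2) m).
  { apply Rle_trans with (sum1 (fun _ => 0) m).
    - clear. induction m; simpl; lra.
    - apply sum1_le. intros n. apply Rmult_le_pos; [apply Hd| apply pow2_ge_0]. }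
  rewrite sum1_quad in H0. fold mu in H0.
  assert (mu ^ 2 * sum1 d m <= mu ^ 2) by (pose proof (pow2_ge_0 mu); nra).
  assert (0 <= sum1 d m).
  { apply Rle_trans with (sum1 (fun _ => 0) m); [clear; induction m; simpl; lra|].
    apply sum1_le. exact Hd. }
  nra.
Qed.

Lemma S_bound F X m : 0 < X ->
  (Ss F X (S m)) ^ 2 <= 2 * (Aa F (S m)) ^ 2 + 2 / X * sum1 (fun n => (Aa F n) ^ 2) m.
Proof.
  intros HX. rewrite abel2.
  set (R1 := sum1 (fun n => Aa F n * dd X n) m).
  assert (HR : R1 ^ 2 <= 1 / X * sum1 (fun n => Aa F n ^ 2) m).
  { unfold R1. rewrite (sum1_ext _ (fun n => dd X n * Aa F n)) by (intros; ring).
    eapply Rle_trans; [apply (jensen (dd X) (Aa F))|].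
    - intros n. apply dd_bounds; exact HX.
    - apply sum_dd; exact HX.
    - assert (E : 1 / X * sum1 (fun n => Aa F n ^ 2) m = sum1 (fun n => 1 / X * Aa F n ^ 2) m).
      { clear. induction m; [simpl; ring|]. rewrite !sum1_S, <- IHm. ring. }
      rewrite E. apply sum1_le. intros n. apply Rmult_le_compat_r; [apply pow2_ge_0|].
      apply dd_bounds; exact HX. }
  pose proof (ww_bounds X HX (S m)) as Hw.
  set (a := Aa F (S m)) in *. set (w := ww X (S m)) in *.
  assert ((a * w) ^ 2 <= a ^ 2).
  { replace ((a * w) ^ 2) with (a ^ 2 * w ^ 2) by ring.
    pose proof (pow2_ge_0 a). assert (w ^ 2 <= 1) by nra. nra. }
  assert (2 / X * sum1 (fun n => Aa F n ^ 2) m = 2 * (1 / X * sum1 (fun n => Aa F n ^ 2) m))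
    by (field; lra).
  pose proof (pow2_ge_0 (a * w - R1)).
  nra.
Qed.

Lemma cont_Rmult (f g : R -> R) x : continuous f x -> continuous g x ->
  continuous (fun y => f y * g y) x.
Proof. intros; apply (continuous_mult f g x); assumption. Qed.
Lemma cont_Rplus (f g : R -> R) x : continuous f x -> continuous g x ->
  continuous (fun y => f y + g y) x.
Proof. intros; apply (continuous_plus f g x); assumption. Qed.
Lemma cont_Rminus (f g : R -> R) x : continuous f x -> continuous g x ->
  continuous (fun y => f y - g y) x.
Proof. intros; apply (continuous_minus f g x); assumption. Qed.

Lemma sqr_eq (t : R) : t * t = t ^ 2.
Proof. ring. Qed.

Lemma cont_c s p e b z : (e = 0 \/ 0 < b) ->
  continuous (fun x => (s - x / p + e / p * (rpow x b / b)) ^ 2) z.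
Proof.
  intros He.
  assert (Hr : continuous (fun x => e / p * (rpow x b / b)) z).
  { destruct He as [He|Hb].
    - subst e. apply continuous_ext with (f := fun _ => 0).
      + intros x. unfold Rdiv. rewrite !Rmult_0_l. reflexivity.
      + apply continuous_const.
    - apply cont_Rmult; [apply continuous_const|].
      apply cont_Rmult; [apply rpow_cont; exact Hb| apply continuous_const]. }
  assert (Hl : continuous (fun x => s - x / p) z).
  { apply cont_Rminus; [apply continuous_const|].
    apply cont_Rmult; [apply continuous_id| apply continuous_const]. }
  assert (HG := cont_Rplus _ _ z Hl Hr). simpl in HG.
  apply continuous_ext with (f := fun x => (s - x / p + e / p * (rpow x b / b)) *
                                           (s - x / p + e / p * (rpow x b / b))).
  - intros x. apply sqr_eq.
  - apply cont_Rmult; exact HG.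
Qed.

Lemma sum0_le_lt f g N : (forall n, (n < N)%nat -> f n <= g n) -> sum0 f N <= sum0 g N.
Proof.
  intros H; induction N; simpl; [lra|].
  assert (f N <= g N) by (apply H; lia).
  assert (sum0 f N <= sum0 g N) by (apply IHN; intros; apply H; lia). lra.
Qed.

Lemma main_bound q a eps beta X h :
  0 < phiR q -> (eps = 0 \/ (0 < beta < 1 /\ 1 / beta <= 2 /\ Rabs eps <= 1)) ->
  2 <= X -> 1 <= h <= X ->
  J1 q a eps beta X h <= 72 * (Hq q a eps beta h + h / phiR q ^ 2).
Proof.
  intros Hphi Heps HX Hh.
  set (F := Defs.Fn q a eps beta).
  set (M := Defs.nfloor h).
  set (u := fun n => (Rabs (Ss F X n)) ^ 2).
  set (v := fun n => (Aa F n) ^ 2).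
  set (T := sum0 v M + (h - INR M) * v M).
  set (P := sum0 v M).
  assert (HMs := nfloor_spec h ltac:(lra)). fold M in HMs.
  assert (Hv0 : forall n, 0 <= v n) by (intros; apply pow2_ge_0).
  assert (HP0 : 0 <= P) by (apply sum0_nonneg; exact Hv0).
  assert (HPT : P <= T) by (unfold T, P; pose proof (Hv0 M); nra).
  assert (HJ : J1 q a eps beta X h = sum0 u M + (h - INR M) * u M).
  { change (J1 q a eps beta X h) with (RInt (fun x => u (Defs.nfloor x)) 0 h).
    apply is_RInt_unique. apply is_RInt_step. lra. }
  assert (H2X : 0 <= 2 / X) by (apply Rlt_le, Rdiv_lt_0_compat; lra).
  assert (Hu : forall n, (n <= M)%nat -> u n <= 2 * v n + 2 / X * P).
  { intros n Hn. destruct n as [|m].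
    - unfold u, v, Ss, Aa. simpl. rewrite Rabs_R0.
      assert (0 <= 2 / X * P) by (apply Rmult_le_pos; assumption). lra.
    - unfold u. rewrite pow2_abs. eapply Rle_trans; [apply S_bound; lra|].
      change (fun n => Aa F n ^ 2) with v. fold (v (S m)).
      assert (sum1 v m <= P).
      { apply Rle_trans with (sum0 v (S m)).
        - rewrite sum0_S1. pose proof (Hv0 O). lra.
        - apply sum0_mono; [exact Hv0| exact Hn]. }
      assert (2 / X * sum1 v m <= 2 / X * P) by (apply Rmult_le_compat_l; assumption).
      lra. }
  assert (HJT : J1 q a eps beta X h <= 4 * T).
  { rewrite HJ.
    assert (H1 : sum0 u M <= sum0 (fun n => 2 * v n + 2 / X * P) M)
      by (apply sum0_le_lt; intros; apply Hu; lia).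
    rewrite sum0_lin in H1.
    assert (H2 : (h - INR M) * u M <= (h - INR M) * (2 * v M + 2 / X * P))
      by (apply Rmult_le_compat_l; [lra| apply Hu; lia]).
    assert (H3 : h * (2 / X * P) <= 2 * P).
    { replace (h * (2 / X * P)) with (2 * (h / X) * P) by (field; lra).
      assert (h / X <= 1).
      { apply Rmult_le_reg_r with X; [lra|]. unfold Rdiv.
        rewrite Rmult_assoc, Rinv_l by lra. lra. }
      nra. }
    change (sum0 v M) with P in H1. assert (HT : T = P + (h - INR M) * v M) by reflexivity. lra. }
  set (k := 1 / phiR q).
  assert (Hk : 0 < k) by (apply Rdiv_lt_0_compat; lra).
  set (g := fun t => (psi t q a - t / phiR q + eps / phiR q * (rpow t beta / beta)) ^ 2).
  assert (HHq : Hq q a eps beta h = RInt g 0 h) by reflexivity.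
  assert (Hexg : ex_RInt g 0 h).
  { apply ex_RInt_pieces; [|lra]. intros n.
    apply ex_RInt_ext with (f := fun x => (sum1 (fun m => if congr q a m then vonMangoldt m else 0) n
                                    - x / phiR q + eps / phiR q * (rpow x beta / beta)) ^ 2).
    - intros x Hx. rewrite Rmin_left in Hx by lra. rewrite Rmax_right in Hx by lra.
      unfold g, psi. rewrite (nfloor_eq x n) by lra. reflexivity.
    - apply (ex_RInt_continuous (V := R_CompleteNormedModule)). intros z _. apply cont_c.
      destruct Heps as [He|[Hb _]]; [left; exact He| right; lra]. }
  assert (Hpt : forall x, 0 <= x -> 1 / 2 * v (Defs.nfloor x) + - (9 * k ^ 2) <= g x).
  { intros x Hx. pose proof (nfloor_spec x Hx) as Hs. set (N := Defs.nfloor x) in *.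
    unfold v, g, psi. fold N.
    set (L := sum1 (fun m => if congr q a m then vonMangoldt m else 0) N).
    assert (HA : Aa F N = L - INR N * (1 / phiR q) + eps / phiR q * spow beta N).
    { exact (sum1_lin (fun m => if congr q a m then vonMangoldt m else 0)
               (fun n => rpow (INR n) (beta - 1)) (1 / phiR q) (eps / phiR q) N). }
    rewrite HA. fold k.
    replace (x / phiR q) with (x * k) by (unfold k; field; lra).
    replace (eps / phiR q) with (eps * k) by (unfold k; field; lra).
    set (A := L - INR N * k + eps * k * spow beta N).
    set (E := (INR N - x) * k + eps * k * (rpow x beta / beta - spow beta N)).
    replace (L - x * k + eps * k * (rpow x beta / beta)) with (A + E) by (unfold A, E; ring).
    assert (HE : - 3 * k <= E <= 3 * k).
    { unfold E. destruct Heps as [He|[Hb [Hb2 Habs]]].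
      - subst eps. split; nra.
      - pose proof (spow_disc beta x Hb Hx) as HD. fold N in HD.
        set (D := rpow x beta / beta - spow beta N) in *.
        apply Rabs_le_between in Habs.
        assert (HD2 : 0 <= D <= 2) by lra.
        assert (HeD : - 2 <= eps * D <= 2) by nra.
        assert (- k <= (INR N - x) * k <= 0) by nra.
        assert (- 2 * k <= eps * D * k <= 2 * k) by nra.
        replace (eps * k * D) with (eps * D * k) by ring. lra. }
    pose proof (pow2_ge_0 (A + 2 * E)). nra. }
  assert (Hlow : 1 / 2 * T + - (9 * k ^ 2) * h <= RInt g 0 h).
  { set (w' := fun n => 1 / 2 * v n + - (9 * k ^ 2)).
    assert (Hw : RInt (fun x => w' (Defs.nfloor x)) 0 h = sum0 w' M + (h - INR M) * w' M)
      by (apply is_RInt_unique, is_RInt_step; lra).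
    assert (RInt (fun x => w' (Defs.nfloor x)) 0 h <= RInt g 0 h).
    { apply RInt_le; [lra| | exact Hexg| ].
      - eexists; apply is_RInt_step; lra.
      - intros x Hx. apply Hpt. lra. }
    assert (Hs0 : sum0 w' M = 1 / 2 * sum0 v M + INR M * - (9 * k ^ 2)) by (apply sum0_lin).
    change (w' M) with (1 / 2 * v M + - (9 * k ^ 2)) in Hw.
    rewrite Hw, Hs0 in H. unfold T. lra. }
  assert (HH0 : 0 <= RInt g 0 h).
  { assert (E0 : RInt (fun _ => 0) 0 h = 0).
    { rewrite (is_RInt_unique (V := R_CompleteNormedModule) _ 0 h _ (is_RInt_const 0 h 0)).
      rewrite scalR, Rmult_0_r. reflexivity. }
    apply Rle_trans with (RInt (fun _ => 0) 0 h); [rewrite E0; lra|].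
    apply RInt_le; [lra| apply ex_RInt_const| exact Hexg|].
    intros; apply pow2_ge_0. }
  rewrite HHq.
  replace (h / phiR q ^ 2) with (h * k ^ 2) by (unfold k; field; lra).
  nra.
Qed.

Lemma phiR_pos q : (1 <= q)%nat -> 0 < phiR q.
Proof.
  intros Hq. unfold phiR. apply lt_0_INR.
  pose proof (prime.totient_gt0 q) as E.
  assert (Hq' : ssrnat.leq 1%nat q = true) by (destruct (@ssrnat.leP 1%nat q); [reflexivity| lia]).
  rewrite Hq' in E.
  destruct (@ssrnat.leP 1%nat (prime.totient q)) as [H|H]; [exact H| discriminate].
Qed.

Theorem lemma4p2 :
  forall c0 : R, 0 < c0 <= 1 / 4 ->
  exists C : R, 0 < C /\
  forall (q : nat) (a : Z) (X h : R),
    (1 <= q)%nat -> Z.gcd a (Z.of_nat q) = 1%Z -> 2 <= X -> 1 <= h <= X ->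
    ((~ exists (chi : nat -> R) (beta : R), exceptional c0 q chi beta) ->
       J1 q a 0 0 X h <= C * (Hq q a 0 0 h + h / (phiR q) ^ 2)) /\
    (forall (chi : nat -> R) (beta : R), exceptional c0 q chi beta ->
       J1 q a (chiZ chi q a) beta X h
         <= C * (Hq q a (chiZ chi q a) beta h + h / (phiR q) ^ 2)).
Proof.
  intros c0 Hc0. exists 72. split; [lra|].
  intros q a X h Hq1 Hgcd HX Hh.
  pose proof (phiR_pos q Hq1) as Hphi.
  split.
  - intros _. apply main_bound; auto.
  - intros chi beta [Hchar [_ [[Hb1 Hb2] _]]].
    apply main_bound; auto. right.
    assert (Hq2 : (2 <= q)%nat).
    { destruct (Nat.eq_dec q 1) as [E|E]; [|lia].
      exfalso. subst q. simpl in Hb1. rewrite ln_1 in Hb1. unfold Rdiv in Hb1.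
      rewrite Rinv_0, Rmult_0_r in Hb1. lra. }
    assert (HL : / 2 < ln (INR q)).
    { apply Rlt_le_trans with (ln 2); [exact ln_lt_2|].
      apply ln_le; [lra|]. apply le_INR in Hq2. simpl in Hq2. lra. }
    set (L := ln (INR q)) in *.
    assert (Hy : / L < 2).
    { assert (L * / L = 1) by (apply Rinv_r; lra).
      assert (0 < / L) by (apply Rinv_0_lt_compat; lra). nra. }
    assert (Hb : / 2 < beta).
    { unfold Rdiv in Hb1. assert (0 < / L) by (apply Rinv_0_lt_compat; lra). nra. }
    split; [lra|]. split.
    + assert (beta * / beta = 1) by (apply Rinv_r; lra).
      assert (0 < / beta) by (apply Rinv_0_lt_compat; lra). unfold Rdiv. nra.
    + unfold chiZ. apply (chi_le1 q chi Hchar Hq1).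
Qed.
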